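(* Assume $K$ is a field and $\tau_{(i)}\neq0$, $\eta_{(i)}\neq0$ for all $i\in\Omega$. Then $\mathbf{P}$ is hierarchical if and only if for all $B,D\in\mathcal{I}(\overline{\mathbf{P}})$, $|B|=|D|$ implies $\deg(\pi(\Omega,B))=\deg(\pi(\Omega,D))$.
   Context: $\Omega$ is a finite set and $\mathbf{P}=(\Omega,\preccurlyeq_{\mathbf{P}})$ a poset; $\overline{\mathbf{P}}$ is the dual poset and $\mathcal{I}(\overline{\mathbf{P}})$ its set of ideals (up-closed subsets of $\mathbf{P}$). For $Y\subseteq\Omega$: $\max(Y)$ is the set of maximal elements of $Y$ w.r.t. $\preccurlyeq_{\mathbf{P}}$; $\mathcal{I}(Y)$ is the set of down-closed subsets of $Y$. $\tau,\eta\in K^{\Omega}$. For $D,I\subseteq\Omega$, $\varphi(D,I)=(-1)^{|I\cap D|}\big(\prod_{i\in I-\max(I)}\tau_{(i)}\big)\big(\prod_{i\in\max(I)-D}\eta_{(i)}\big)$ if $I\cap D\subseteq\max(I)$, and $0$ otherwise; for $D\subseteq Y\subseteq\Omega$, $\pi(Y,D)=\sum_{I\in\mathcal{I}(Y)}\varphi(D,I)x^{|I|}\in K[x]$. $\mathrm{len}(y)$ is the largest cardinality of a chain in $\mathbf{P}$ with greatest element $y$; $\mathbf{P}$ is hierarchical if $\mathrm{len}(u)+1\leqslant\mathrm{len}(v)$ implies $u\preccurlyeq_{\mathbf{P}}v$. *)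

(* Defs.v *)
From HB Require Import structures.
From mathcomp Require Import all_boot all_order all_algebra.
Set Implicit Arguments. Unset Strict Implicit. Unset Printing Implicit Defensive.
Import Order.TTheory GRing.Theory.
Local Open Scope order_scope.

Section PosetPoly.
Variables (d : Order.disp_t) (T : finPOrderType d).

Definition maxset_of (Y : {set T}) : {set T} :=
  [set y in Y | [forall z in Y, (y <= z) ==> (z == y)]].

Definition downclosed_in (Y I : {set T}) : bool :=
  (I \subset Y) && [forall x in I, forall y in Y, (y <= x) ==> (y \in I)].

(* ideals of the dual poset: up-closed subsets of Omega *)
Definition upclosed (B : {set T}) : bool :=
  [forall x in B, forall y, (x <= y) ==> (y \in B)].

Definition is_chain (C : {set T}) : bool :=
  [forall x in C, forall y in C, (x <= y) || (y <= x)].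

Definition len (y : T) : nat :=
  \max_(C : {set T} | is_chain C && (y \in C) && [forall c in C, c <= y]) #|C|.

Definition hierarchical : Prop :=
  forall u v : T, (len u + 1 <= len v)%N -> u <= v.

Local Open Scope ring_scope.
Variables (K : fieldType) (tau eta : T -> K).

Definition phi (D I : {set T}) : K :=
  if (I :&: D) \subset maxset_of I then
    (-1) ^+ #|I :&: D| * (\prod_(i in I :\: maxset_of I) tau i)
      * (\prod_(i in maxset_of I :\: D) eta i)
  else 0.

Definition pi_poly (Y D : {set T}) : {poly K} :=
  \sum_(I : {set T} | downclosed_in Y I) (phi D I) *: 'X^#|I|.

End PosetPoly.

(* degree of a polynomial (pi_poly is never 0: its constant term is 1) *)
Definition deg (K : fieldType) (p : {poly K}) : nat := (size p).-1.

(* Main.v *)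
Require Import Defs.
From HB Require Import structures.
From mathcomp Require Import all_boot all_order all_algebra zify.
Set Implicit Arguments. Unset Strict Implicit. Unset Printing Implicit Defensive.
Import Order.TTheory.

Section Len.
Variables (d : Order.disp_t) (T : finPOrderType d).
Local Open Scope order_scope.

Definition chainP (y : T) (C : {set T}) :=
  is_chain C && (y \in C) && [forall c in C, c <= y].

Lemma len_ge1 (y : T) : (1 <= len y)%N.
Proof.
rewrite /len; have -> : 1%N = #|[set y]| by rewrite cards1.
apply: leq_bigmax_cond.
rewrite /is_chain set11 andbT; apply/andP; split.
  by apply/forallP=> x; apply/implyP=> /set1P ->; apply/forallP=> z; apply/implyP=> /set1P ->; rewrite lexx.
by apply/forallP=> x; apply/implyP=> /set1P ->.
Qed.

Lemma len_le (y : T) : (len y <= #|T|)%N.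
Proof. by apply/bigmax_leqP => C _; apply: max_card. Qed.

Lemma len_wit (y : T) : exists C, chainP y C /\ #|C| = len y.
Proof.
rewrite /len.
have h : (0 < #|[pred C : {set T} | chainP y C]|)%N.
  apply/card_gt0P; exists [set y]; rewrite inE /chainP /is_chain set11 andbT; apply/andP; split.
  by apply/forallP=> x; apply/implyP=> /set1P ->; apply/forallP=> z; apply/implyP=> /set1P ->; rewrite lexx.
  by apply/forallP=> x; apply/implyP=> /set1P ->.
have [C0 hC0 e] := eq_bigmax_cond (fun C : {set T} => #|C|) h.
exists C0; split; first by move: hC0; rewrite inE.
by rewrite -e.
Qed.

Lemma len_mono (x y : T) : x < y -> (len x < len y)%N.
Proof.
move=> xy; have [C [/andP[/andP[ch xC] le] e]] := len_wit x.
have yC : y \notin C.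
  apply/negP=> yC; move/forallP: le => /(_ y); rewrite yC /= => yx.
  by move: (lt_le_trans xy yx); rewrite ltxx.
rewrite -e; have -> : #|C|.+1 = #|y |: C| by rewrite cardsU1 yC.
apply: leq_bigmax_cond; rewrite setU11 andbT; apply/andP; split.
  apply/forallP=> a; apply/implyP=> /setU1P[->|aC]; apply/forallP=> b; apply/implyP=> /setU1P[->|bC].
  - by rewrite lexx.
  - by move/forallP: le => /(_ b); rewrite bC /= => bx; rewrite (le_trans bx (ltW xy)) orbT.
  - by move/forallP: le => /(_ a); rewrite aC /= => ax; rewrite (le_trans ax (ltW xy)).
  - by move/forallP: ch => /(_ a); rewrite aC /= => /forallP /(_ b); rewrite bC.
apply/forallP=> a; apply/implyP=> /setU1P[->|aC]; first by rewrite lexx.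
by move/forallP: le => /(_ a); rewrite aC /= => ax; rewrite (le_trans ax (ltW xy)).
Qed.

Lemma len_pred (v : T) : (2 <= len v)%N -> exists w, w < v /\ len w = (len v).-1.
Proof.
move=> h2; have [C [/andP[/andP[ch vC] le] e]] := len_wit v.
set C' := C :\ v.
have cC' : #|C'| = (len v).-1 by rewrite -e (cardsD1 v C) vC.
have [w0 w0C] : exists w0, w0 \in C'.
  by apply/set0Pn; rewrite -card_gt0 cC'; case: (len v) h2 => [|[]].
have [w wC wmax] : exists2 w, w \in C' & forall c, c \in C' -> (len c <= len w)%N.
  by case: (arg_maxnP (fun w => len w) w0C) => i iC H; exists i => // c /H.
have wlt : w < v.
  move: wC; rewrite /C' !inE => /andP[wv wCC]; rewrite lt_def eq_sym wv /=.
  by move/forallP: le => /(_ w); rewrite wCC.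
exists w; split => //.
apply/eqP; rewrite eqn_leq; apply/andP; split.
  by have := len_mono wlt; case: (len v).
rewrite -cC'; apply: leq_bigmax_cond; rewrite wC andbT; apply/andP; split.
  apply/forallP=> a; apply/implyP=> /setD1P[_ aC]; apply/forallP=> b; apply/implyP=> /setD1P[_ bC].
  by move/forallP: ch => /(_ a); rewrite aC /= => /forallP /(_ b); rewrite bC.
apply/forallP=> c; apply/implyP=> cC.
have cw := wmax c cC.
move: wC cC; rewrite !inE => /andP[_ wCC] /andP[_ cCC].
move/forallP: ch => /(_ c); rewrite cCC /= => /forallP /(_ w); rewrite wCC /=.
case/orP=> // wc; move: wc; rewrite le_eqVlt => /orP[/eqP->|wc]; first by rewrite lexx.
by have := len_mono wc; rewrite ltnNge cw.
Qed.

Lemma len_prefix (n : nat) (v : T) (j : nat) : (1 <= j)%N -> len v = (j + n)%N ->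
  exists w, w <= v /\ len w = j.
Proof.
elim: n v => [|n IH] v j1 e; first by exists v; split; [rewrite lexx | rewrite e addn0].
have h2 : (2 <= len v)%N by rewrite e; lia.
have [w [wv lw]] := len_pred h2.
have e' : len w = (j + n)%N by rewrite lw e addnS.
have [w' [w'w lw']] := IH w j1 e'.
by exists w'; split => //; apply: le_trans w'w (ltW wv).
Qed.

End Len.
Import Order.TTheory.

Section Mins.
Variables (d : Order.disp_t) (T : finPOrderType d).
Local Open Scope order_scope.
Implicit Types (D : {set T}) (x y z : T).

Definition mins_def D : {set T} := [set y in D | [forall z in D, (z <= y) ==> (z == y)]].
Fact mins_key : unit. Proof. exact: tt. Qed.
Definition mins := locked_with mins_key mins_def.
Lemma minsE : mins = mins_def. Proof. by rewrite /mins unlock. Qed.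

Lemma minsP D y : reflect (y \in D /\ forall z, z \in D -> z < y -> False) (y \in mins D).
Proof.
rewrite minsE inE; apply: (iffP andP) => [[yD /forallP H]|[yD H]]; split => //.
  move=> z zD zy; move: (H z); rewrite zD (ltW zy) /= => /eqP ezy.
  by move: zy; rewrite ezy ltxx.
apply/forallP=> z; apply/implyP=> zD; apply/implyP; rewrite le_eqVlt => /orP[//|zy].
by case: (H z zD zy).
Qed.

Lemma upclosedP D : reflect (forall a b, a \in D -> a <= b -> b \in D) (upclosed D).
Proof.
apply: (iffP forallP) => [H a b aD ab|H a].
  by move: (H a); rewrite aD /= => /forallP /(_ b); rewrite ab.
by apply/implyP=> aD; apply/forallP=> b; apply/implyP; apply: H.
Qed.

Lemma len_lemono x y : x <= y -> (len x <= len y)%N.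
Proof. by rewrite le_eqVlt => /orP[/eqP->//|/len_mono/ltnW]. Qed.

Lemma add_min D x : upclosed D -> x \notin D -> (forall z, x < z -> z \in D) ->
  upclosed (x |: D) /\
  (#|mins (x |: D)| + #|mins D :&: [set z | (x < z)%O]| = #|mins D| + 1)%N.
Proof.
move=> /upclosedP uD xD xadd.
have E : mins (x |: D) = x |: (mins D :\: [set z | (x < z)%O]).
  apply/setP=> y; rewrite !inE; apply/idP/idP.
    move/minsP=> [/setU1P[->|yD] ym]; first by rewrite eqxx.
    apply/orP; right; apply/andP; split.
      apply/negP=> xy; apply: (ym x) => //; exact: setU11.
    apply/minsP; split => // z zD zy; apply: (ym z) => //; exact: setU1r.
  case/orP=> [/eqP->|/andP[nxy /minsP[yD ym]]]; apply/minsP; split.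
  - exact: setU11.
  - move=> z /setU1P[->|zD] zx; first by move: zx; rewrite ltxx.
    by move: xD; rewrite (uD z x zD (ltW zx)).
  - exact: setU1r.
  - move=> z /setU1P[->|zD] zy; first by rewrite zy in nxy.
    exact: (ym z zD zy).
split.
  apply/upclosedP=> a b /setU1P[->|aD] ab.
    by move: ab; rewrite le_eqVlt => /orP[/eqP->|xb]; [exact: setU11 | apply/setU1r/xadd].
  by apply/setU1r/(uD a b aD ab).
have xn : x \notin mins D :\: [set z | (x < z)%O].
  by rewrite !inE ltxx /=; apply/negP => /minsP[xD' _]; rewrite xD' in xD.
rewrite E cardsU1 xn cardsD.
have := subsetIl (mins D) [set z | (x < z)%O]; move/subset_leq_card; lia.
Qed.

Definition Cond := forall B D : {set T}, upclosed B -> upclosed D -> #|B| = #|D| ->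
  #|mins B| = #|mins D|.

Lemma no_two (C : Cond) D x y : upclosed D ->
  x \notin D -> (forall z, x < z -> z \in D) ->
  y \notin D -> (forall z, y < z -> z \in D) ->
  (exists m, m \in mins D /\ x < m) -> (forall m, m \in mins D -> ~~ (y < m)) -> False.
Proof.
move=> uD xD xa yD ya [m [mD xm]] ny.
have [ux ex] := add_min uD xD xa.
have [uy ey] := add_min uD yD ya.
have cxy : #|x |: D| = #|y |: D| by rewrite !cardsU1 xD yD.
have := C _ _ ux uy cxy.
have E0 : mins D :&: [set z | (y < z)%O] = set0.
  by apply/setP=> z; rewrite !inE; apply/negP => /andP[/ny/negP].
rewrite E0 in ey.
have : (0 < #|mins D :&: [set z | (x < z)%O]|)%N.
  by apply/card_gt0P; exists m; rewrite !inE xm andbT.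
rewrite cards0 in ey. lia.
Qed.

Lemma cond_hier (C : Cond) : hierarchical T.
Proof.
have P : forall n h : nat, (#|T| <= h + n)%N -> forall u v : T, (h <= len u)%N -> (len u < len v)%N -> u < v.
  elim=> [|n IH] h hn u v hu huv.
    by have := len_le v; lia.
  have IH1 := IH h.+1 (ltac:(lia)).
  case: (ltnP h (len u)) => hu'; first exact: IH1.
  have lu : len u = h by lia.
  have [w [wv lw]] : exists w, w <= v /\ len w = h.+1.
    apply: (@len_prefix _ _ (len v - h.+1) v h.+1) => //; lia.
  apply: (lt_le_trans _ wv).
  case: (boolP (u < w)) => // nuw; exfalso.
  case: (boolP [exists t, (len t == h.+1) && (u < t)]).
    move/existsP=> [t0 /andP[/eqP lt0 ut0]].
    pose D' := [set z | (h.+1 < len z)%N || ((len z == h.+1) && (u < z))].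
    apply: (@no_two C D' u w).
    - apply/upclosedP=> a b; rewrite !inE => Ha; rewrite le_eqVlt => /orP[/eqP<-//|/len_mono ab].
      apply/orP; left; case/orP: Ha => [|/andP[/eqP]]; lia.
    - rewrite inE lu; apply/negP => /orP[|/andP[/eqP]]; lia.
    - move=> z uz; rewrite inE uz andbT; have := len_mono uz; rewrite lu; lia.
    - by rewrite inE lw ltnn eqxx (negbTE nuw).
    - by move=> z /len_mono; rewrite inE lw => ->.
    - exists t0; split => //; apply/minsP; split; first by rewrite inE lt0 eqxx ut0 orbT.
      move=> z; rewrite inE => Hz /len_mono; case/orP: Hz => [|/andP[/eqP]]; lia.
    - move=> m /minsP [mD mm]; apply/negP => /len_mono wm.
      apply: (mm t0); first by rewrite inE lt0 eqxx ut0 orbT.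
      apply: IH1; lia.
  rewrite negb_exists => /forallP nex.
  have [w' [w'w lw']] : exists w', w' <= w /\ len w' = h.
    apply: (@len_prefix _ _ 1 w h); [have := len_ge1 u | ]; lia.
  have w'lt : w' < w.
    by rewrite lt_def w'w andbT; apply/negP => /eqP e; move: lw; rewrite e lw'; lia.
  pose D := [set z : T | (h < len z)%N].
  apply: (@no_two C D w' u).
  - apply/upclosedP=> a b; rewrite !inE => Ha /len_lemono; lia.
  - by rewrite inE lw' ltnn.
  - by move=> z /len_mono; rewrite inE lw'.
  - by rewrite inE lu ltnn.
  - by move=> z /len_mono; rewrite inE lu.
  - exists w; split => //; apply/minsP; split; first by rewrite inE lw.
    by move=> z; rewrite inE => Hz /len_mono; lia.
  - move=> m /minsP [mD mm]; apply/negP => um.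
    move: mD; rewrite inE => hm.
    case: (boolP (len m == h.+1)) => em.
      by move: (nex m); rewrite em um.
    apply: (mm w); first by rewrite inE lw.
    apply: IH1; move/eqP: em; lia.
move=> u v huv; apply/ltW; apply: (P #|T| 0) => //; lia.
Qed.

Lemma hier_mins (H : hierarchical T) D z : upclosed D -> z \in D ->
  (forall y, y \in D -> (len z <= len y)%N) ->
  #|D| = (#|[set y : T | (len z < len y)%N]| + #|mins D|)%N.
Proof.
move=> /upclosedP uD zD zm.
set S := [set y : T | (len z < len y)%N].
have SD : S \subset D.
  apply/subsetP=> y; rewrite inE => zy; apply: (uD z) => //; apply: H; lia.
have -> : mins D = D :\: S.
  apply/setP=> y; rewrite !inE; apply/idP/idP.
    move/minsP=> [yD ym]; rewrite yD andbT -leqNgt.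
    case: (ltnP (len z) (len y)) => // zy; exfalso.
    apply: (ym z zD); rewrite lt_def.
    have -> : z <= y by apply: H; lia.
    by rewrite andbT; apply/negP=> /eqP e; move: zy; rewrite e ltnn.
  move=> /andP[ny yD]; apply/minsP; split => // x xD /len_mono.
  have := zm x xD; rewrite -leqNgt in ny; lia.
by rewrite -(cardsID S D) (setIidPr SD).
Qed.

Lemma hier_cond (H : hierarchical T) : Cond.
Proof.
have ex : forall D, D != set0 -> exists2 z, z \in D & forall y, y \in D -> (len z <= len y)%N.
  move=> D /set0Pn [z0 z0D].
  by case: (arg_minnP (fun z => len z) z0D) => z zD zm; exists z.
move=> B D uB uD e.
case: (eqVneq B set0) => [B0|nB].
  have D0 : D = set0 by apply/eqP; rewrite -cards_eq0 -e B0 cards0.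
  by rewrite B0 D0.
have nD : D != set0 by rewrite -card_gt0 -e card_gt0.
have [zB zBB mB] := ex B nB; have [zD zDD mD] := ex D nD.
have eB := hier_mins H uB zBB mB; have eD := hier_mins H uD zDD mD.
have side : forall (B D : {set T}) (zB zD : T), upclosed B -> zB \in B -> zD \in D ->
    (forall y, y \in D -> (len zD <= len y)%N) -> (len zB < len zD)%N -> (#|D| < #|B|)%N.
  move=> B1 D1 z1 z2 /upclosedP u1 z1B z2D m2 lt12.
  set S := [set y : T | (len z1 < len y)%N].
  have DS : D1 \subset S by apply/subsetP=> y yD; rewrite inE; have := m2 y yD; lia.
  have SB : S \proper B1.
    apply/properP; split; last by exists z1; rewrite // inE ltnn.
    apply/subsetP=> y; rewrite inE => zy; apply: (u1 z1) => //; apply: H; lia.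
  exact: (leq_ltn_trans (subset_leq_card DS) (proper_card SB)).
case: (ltngtP (len zB) (len zD)) => c.
- by have := side B D zB zD uB zBB zDD mD c; lia.
- by have := side D B zD zB uD zDD zBB mB c; lia.
- by move: eB eD; rewrite c; lia.
Qed.

End Mins.
Import GRing.Theory.

Section Deg.
Variables (d : Order.disp_t) (T : finPOrderType d).
Variables (K : fieldType) (tau eta : T -> K).
Hypotheses (htau : forall i, tau i != 0%R) (heta : forall i, eta i != 0%R).

Lemma phi_sub (D I : {set T}) : downclosed_in setT I -> phi tau eta D I != 0%R ->
  I \subset ~: D :|: mins D.
Proof.
move=> /andP[_ /forallP dI]; rewrite /phi; case: ifP => [/subsetP cond _|]; last by rewrite eqxx.
apply/subsetP=> x xI; rewrite in_setU in_setC.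
case: (boolP (x \in D)) => //= xD.
apply/minsP; split => // z zD zx.
have zI : z \in I.
  by move: (dI x); rewrite xI /= => /forallP /(_ z); rewrite in_setT /= (Order.POrderTheory.ltW zx).
have := cond z; rewrite in_setI zI zD => /(_ isT).
rewrite inE => /andP[_ /forallP /(_ x)]; rewrite xI (Order.POrderTheory.ltW zx) /= => /eqP exz.
by move: zx; rewrite exz Order.POrderTheory.ltxx.
Qed.

Lemma dc0 (D : {set T}) : upclosed D -> downclosed_in setT (~: D :|: mins D).
Proof.
move=> /upclosedP uD; rewrite /downclosed_in subsetT /=.
apply/forallP=> x; apply/implyP => xI; apply/forallP=> y; apply/implyP=> _; apply/implyP=> yx.
move: xI; rewrite !in_setU !in_setC.
case: (boolP (y \in D)) => //= yD.
case: (boolP (x \in D)) => /= [xD /minsP [_ xm]|xD]; last by rewrite (uD y x yD yx) in xD.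
apply/minsP; split => // z zD zy; apply: (xm z zD).
exact: Order.POrderTheory.lt_le_trans zy yx.
Qed.

Lemma phi0 (D : {set T}) : upclosed D -> phi tau eta D (~: D :|: mins D) != 0%R.
Proof.
move=> /upclosedP uD; rewrite /phi.
have -> : ((~: D :|: mins D) :&: D) \subset maxset_of (~: D :|: mins D).
  apply/subsetP=> x; rewrite in_setI in_setU in_setC => /andP[xI xD].
  rewrite inE in_setU in_setC xD /=; move: xI; rewrite xD /= => xm; rewrite xm /=.
  apply/forallP=> z; apply/implyP; rewrite in_setU in_setC => zI; apply/implyP=> xz.
  have zD := uD x z xD xz; rewrite zD /= in zI.
  move/minsP: zI => [_ zm]; rewrite eq_sym; apply/negPn/negP => nxz.
  by apply: (zm x xD); rewrite Order.POrderTheory.lt_def xz andbT; rewrite eq_sym in nxz.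
rewrite !mulf_neq0 //.
- by rewrite expf_neq0 // oppr_eq0 oner_eq0.
- by apply/prodf_neq0.
- by apply/prodf_neq0.
Qed.

Lemma deg_pi (D : {set T}) : upclosed D ->
  deg (pi_poly tau eta setT D) = (#|~: D| + #|mins D|)%N.
Proof.
move=> uD.
set I0 := ~: D :|: mins D.
have cI0 : #|I0| = (#|~: D| + #|mins D|)%N.
  rewrite /I0 cardsU.
  have -> : ~: D :&: mins D = set0.
    apply/setP=> x; rewrite in_setI in_setC in_set0.
    by case: (boolP (x \in mins D)) => [/minsP[-> _]|]; rewrite ?andbF.
  by rewrite cards0 subn0.
set p := pi_poly tau eta setT D.
have cf : forall k, (#|I0| <= k)%N -> (p`_k = phi tau eta D I0 * (k == #|I0|)%:R)%R.
  move=> k hk; rewrite /p /pi_poly coef_sum (bigD1 I0) ?dc0 //= coefZ coefXn.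
  rewrite big1 ?addr0 // => I /andP[dI nI]; rewrite coefZ coefXn.
  case: (eqVneq (phi tau eta D I) 0%R) => [->|nz]; first by rewrite mul0r.
  have sI := phi_sub dI nz.
  have lt : (#|I| < #|I0|)%N.
    by apply: proper_card; rewrite properEneq nI sI.
  have -> : (k == #|I|) = false by apply/eqP; lia.
  by rewrite mulr0.
have sz : size p = #|I0|.+1.
  apply/eqP; rewrite eqn_leq; apply/andP; split.
    apply/leq_sizeP=> j hj; rewrite cf; last by lia.
    have -> : (j == #|I0|) = false by apply/eqP; lia.
    by rewrite mulr0.
  rewrite ltnNge; apply/negP=> /leq_sizeP /(_ #|I0| (leqnn _)).
  rewrite cf // eqxx mulr1 => /eqP; apply/negP; exact: phi0.
by rewrite /deg sz /= cI0.
Qed.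

End Deg.

Theorem proposition3p2 (d : Order.disp_t) (T : finPOrderType d) (K : fieldType)
  (tau eta : T -> K)
  (htau : forall i, tau i != 0%R) (heta : forall i, eta i != 0%R) :
  hierarchical T <->
  (forall B D : {set T}, upclosed B -> upclosed D -> #|B| = #|D| ->
     deg (pi_poly tau eta setT B) = deg (pi_poly tau eta setT D)).
Proof.
split.
  move=> H B D uB uD e.
  rewrite (deg_pi htau heta uB) (deg_pi htau heta uD).
  have := hier_cond H uB uD e; have := cardsC B; have := cardsC D; lia.
move=> C; apply: cond_hier => B D uB uD e.
have := C B D uB uD e; rewrite (deg_pi htau heta uB) (deg_pi htau heta uD).
have := cardsC B; have := cardsC D; lia.
Qed.
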